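(* Let $n\ge1$ and let $\mathbf F$ be any family of subsets of $[n]$. Identify vertices of $Q_n$ with subsets of $[n]$. Let $G(\mathbf F)$ be the subgraph of $Q_n$ induced by $\mathbf X(\mathbf F)$ and $G'(\mathbf F)$ the subgraph induced by its complement $2^{[n]}\setminus \mathbf X(\mathbf F)$. Then $\Delta(G(\mathbf F))\le \max\{r(\mathbf F),t(\mathbf F)\}$ and $\Delta(G'(\mathbf F))\le\max\{r(\mathbf F),t(\mathbf F)\}$.
   Context: $[n]=\{1,\dots,n\}$; a subset $T\subseteq[n]$ is identified with the vertex $x\in\{0,1\}^n$ having $x_i=1$ iff $i\in T$, so two subsets are adjacent in $Q_n$ iff their symmetric difference has exactly one element. $\mathbf X(\mathbf F)=\{S\subseteq[n]: |S| \text{ even and } F\subseteq S \text{ for some } F\in\mathbf F\}\cup\{S\subseteq[n]: |S|\text{ odd and } F\not\subseteq S\text{ for all }F\in\mathbf F\}$. The rank $r(\mathbf F)$ is the largest cardinality of a member of $\mathbf F$. $t(\mathbf F)$ is the largest $t$ for which there exist $F_1,\dots,F_t\in\mathbf F$ and elements $x_1,\dots,x_t$ with $x_i\in F_j$ iff $i=j$ (for all $1\le i,j\le t$). $\Delta$ denotes maximum degree. *)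

(* Defs.v *)
From mathcomp Require Import all_boot.
Set Implicit Arguments. Unset Strict Implicit. Unset Printing Implicit Defensive.

Definition qadj (n : nat) (S T : {set 'I_n}) : bool :=
  #|(S :\: T) :|: (T :\: S)| == 1.

Definition Xset (n : nat) (F : {set {set 'I_n}}) : {set {set 'I_n}} :=
  [set S : {set 'I_n} |
     (~~ odd #|S| && [exists A in F, A \subset S])
  || (odd #|S| && [forall A in F, ~~ (A \subset S)])].

Definition ideg (n : nat) (V : {set {set 'I_n}}) (S : {set 'I_n}) : nat :=
  #|[set T in V | qadj S T]|.

Definition maxdeg (n : nat) (V : {set {set 'I_n}}) : nat :=
  \max_(S in V) ideg V S.

Definition rankF (n : nat) (F : {set {set 'I_n}}) : nat :=
  \max_(A in F) #|A|.

Definition has_t (n : nat) (F : {set {set 'I_n}}) (t : nat) : bool :=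
  [exists Fs : {ffun 'I_t -> {set 'I_n}}, exists xs : {ffun 'I_t -> 'I_n},
     [forall i, Fs i \in F] &&
     [forall i, forall j, (xs i \in Fs j) == (i == j)]].

(* t(F): the largest such t.  Any such t satisfies t <= n (the x_i are
   pairwise distinct elements of [n]), so maximizing over t < n.+2 gives
   the true maximum. *)
Definition tF (n : nat) (F : {set {set 'I_n}}) : nat :=
  \max_(t < n.+2 | has_t F t) t.

(* Main.v *)
Require Import Defs.
From mathcomp Require Import all_boot.
Set Implicit Arguments. Unset Strict Implicit. Unset Printing Implicit Defensive.

Definition Ex (n : nat) (F : {set {set 'I_n}}) (S : {set 'I_n}) : bool :=
  [exists A in F, A \subset S].

Lemma qadjP n (S T : {set 'I_n}) : qadj S T ->
  exists x, (x \in S /\ T = S :\ x) \/ (x \notin S /\ T = x |: S).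
Proof.
rewrite /qadj => /cards1P [x Hx].
have Hy: forall y, ((y \in S) != (y \in T)) = (y == x).
  move=> y; move/setP: Hx => Hx; have := Hx y; rewrite /= !inE.
  by case: (y \in S); case: (y \in T).
exists x; case xS: (x \in S).
- left; split=> //; apply/setP=> y; rewrite !inE.
  have := Hy y; case: (eqVneq y x) => [->|ne]; rewrite ?xS;
    case: (_ \in T) => //=; by case: (y \in S).
- right; split=> //; apply/setP=> y; rewrite !inE.
  have := Hy y; case: (eqVneq y x) => [->|ne]; rewrite ?xS;
    case: (_ \in T) => //=; by case: (y \in S).
Qed.

Lemma deg_r n (F : {set {set 'I_n}}) (V : {set {set 'I_n}}) (S A : {set 'I_n}) : A \in F ->
  (forall T, T \in V -> qadj S T -> exists2 x, x \in A & T = S :\ x) ->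
  ideg V S <= rankF F.
Proof.
move=> AF H.
apply: leq_trans (_ : #|(fun x => S :\ x) @: A| <= _).
  apply: subset_leq_card; apply/subsetP => T; rewrite inE => /andP[TV adj].
  have [x xA ->] := H T TV adj; exact: imset_f.
apply: leq_trans (leq_imset_card _ _) _.
rewrite /rankF; exact: leq_bigmax_cond.
Qed.

Lemma deg_t n (F : {set {set 'I_n}}) (V : {set {set 'I_n}}) (S : {set 'I_n}) :
  (forall T, T \in V -> qadj S T -> exists x, [/\ x \notin S, T = x |: S &
     exists2 A, A \in F & (x \in A) && (A \subset T)]) ->
  ideg V S <= tF F.
Proof.
move=> H.
pose X' := [set x | (x \notin S) && [exists A in F, (x \in A) && (A \subset x |: S)]].
have s1 : ideg V S <= #|X'|.
  apply: leq_trans (_ : #|(fun x => x |: S) @: X'| <= _).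
    apply: subset_leq_card; apply/subsetP => T; rewrite inE => /andP[TV adj].
    have [x [xS -> [A AF hA]]] := H T TV adj.
    apply: imset_f; rewrite inE xS /=; apply/existsP; exists A; by rewrite AF.
  exact: leq_imset_card.
have s2 : has_t F #|X'|.
  have pk : forall i : 'I_#|X'|, exists2 B,
      [pick A in F | (enum_val i \in A) && (A \subset enum_val i |: S)] = Some B
      & [/\ B \in F, enum_val i \in B & B \subset enum_val i |: S].
    move=> i; have: enum_val i \in X' := enum_valP i.
    rewrite inE => /andP[_ /existsP [A /andP[AF hA]]].
    case: pickP => [B /andP[BF /andP[h1 h2]]|/(_ A)]; last by rewrite AF hA.
    by exists B.
  apply/existsP.
  exists [ffun i => odflt set0 [pick A in F | (enum_val i \in A) && (A \subset enum_val i |: S)]].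
  apply/existsP; exists [ffun i => enum_val i]; apply/andP; split.
    apply/forallP=> i; rewrite ffunE; have [B -> [BF _ _]] := pk i; exact: BF.
  apply/forallP=> i; apply/forallP=> j; rewrite !ffunE.
  have [B -> [BF xjB BS]] := pk j; rewrite /=.
  case: (eqVneq i j) => [->|ne]; first by rewrite xjB.
  suff: enum_val i \notin B by move/negbTE->.
  apply/negP=> xiB; have := subsetP BS _ xiB; rewrite in_setU1 => /orP[/eqP e|xiS].
    by move: ne; rewrite (enum_val_inj e) eqxx.
  have: enum_val i \in X' := enum_valP i.
  by rewrite inE xiS.
have lt : #|X'| < n.+2.
  by apply: leq_trans (ltnSn _) _; rewrite ltnS (leq_trans (max_card X')) // card_ord.
apply: leq_trans s1 _.
rewrite /tF; exact: (@leq_bigmax_cond _ (fun t : 'I_n.+2 => has_t F t) (fun t : 'I_n.+2 => nat_of_ord t) (Ordinal lt) s2).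
Qed.

Lemma gen n (F : {set {set 'I_n}}) (V : {set {set 'I_n}}) b :
  (forall S, (S \in V) = ((odd #|S| (+) Ex F S) == b)) ->
  maxdeg V <= maxn (rankF F) (tF F).
Proof.
move=> hV; apply/bigmax_leqP => S SV.
have par : forall T, T \in V -> qadj S T ->
   exists x, ((x \in S /\ T = S :\ x) \/ (x \notin S /\ T = x |: S))
     /\ Ex F T = ~~ Ex F S.
  move=> T TV adj; have [x hx] := qadjP adj; exists x; split=> //.
  have oT : odd #|T| = ~~ odd #|S|.
    case: hx => [[xS ->]|[xS ->]].
      by rewrite [#|S|](cardsD1 x) xS /= negbK.
    by rewrite cardsU1 xS.
  move: SV TV; rewrite !hV oT => /eqP <-.
  by case: (odd _); case: (Ex F S); case: (Ex F T).
case ES: (Ex F S).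
- have [A AF AS] : exists2 A, A \in F & A \subset S.
    by move/existsP: ES => [A /andP[]]; exists A.
  apply: leq_trans (leq_maxl _ _).
  apply: (deg_r AF) => T TV adj.
  have [x [[[xS eT]|[xS eT]] ET]] := par T TV adj.
    exists x => //; apply/negPn/negP => xA.
    suff: Ex F T by rewrite ET ES.
    apply/existsP; exists A; rewrite AF eT /=; apply/subsetP => y yA; rewrite !inE.
    by rewrite (subsetP AS _ yA) andbT; apply: contraNneq xA => <-.
  suff: Ex F T by rewrite ET ES.
  apply/existsP; exists A; rewrite AF eT /=; exact: (subset_trans AS (subsetUr _ _)).
- apply: leq_trans (leq_maxr _ _).
  apply: deg_t => T TV adj.
  have [x [[[xS eT]|[xS eT]] ET]] := par T TV adj;
    have /existsP [A /andP[AF AT]] : Ex F T by rewrite ET ES.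
    suff: Ex F S by rewrite ES.
    apply/existsP; exists A; rewrite AF /=; apply: subset_trans AT _; rewrite eT; exact: subD1set.
  exists x; split=> //; exists A => //; rewrite AT andbT.
  apply/negPn/negP => xA.
  suff: Ex F S by rewrite ES.
  apply/existsP; exists A; rewrite AF /=; apply/subsetP => y yA.
  move: (subsetP AT _ yA); rewrite eT in_setU1 => /orP[/eqP e|//].
  by move: xA; rewrite -e yA.
Qed.

Theorem lemma3p2 (n : nat) (F : {set {set 'I_n}}) : 1 <= n ->
  maxdeg (Xset F) <= maxn (rankF F) (tF F) /\
  maxdeg (~: Xset F) <= maxn (rankF F) (tF F).
Proof.
have h : forall S : {set 'I_n}, [forall A in F, ~~ (A \subset S)] = ~~ Ex F S.
  by move=> S; rewrite /Ex negb_exists; apply/eq_forallb => A; case: (A \in F).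
move=> _; split.
  apply: (@gen _ _ _ true) => S; rewrite /Xset inE h -/(Ex F S).
  by case: (odd _); case: (Ex F S).
apply: (@gen _ _ _ false) => S; rewrite inE /Xset inE h -/(Ex F S).
by case: (odd _); case: (Ex F S).
Qed.
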